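(* Let $M$ be a finite $\mathscr R$-trivial monoid and $k$ a field. The vertex set of $Q(kM)$ is $\Lambda(M)$. Let $X,Y\in\Lambda(M)$ with idempotent generators $e_X,e_Y$, and let $\equiv$ be the least equivalence relation on $e_YMe_X$ such that (a) $e_Ymne_X\equiv e_Yme_X$ whenever $\sigma(m)\not\ge Y$ and $\sigma(n)\ge X$; (b) $z\equiv z'$ for all $z,z'\in\nabla Y\nabla X$ (lying in $e_YMe_X$). Let $Z_{X,Y}$ be the complement of the class of $\nabla Y\nabla X$ in $e_YMe_X/{\equiv}$. (1) If $X$ and $Y$ are incomparable, the number of arrows from $X$ to $Y$ is $|Z_{X,Y}|$. (2) In all other cases there are $|Z_{X,Y}|-1$ arrows from $X$ to $Y$.
   Context: $M$ is $\mathscr R$-trivial if $mM=nM$ implies $m=n$. $E(M)$ idempotents; $m^\omega$ the idempotent power of $m$. $\Lambda(M)$ is the set of ideals $MeM$, $e\in E(M)$, ordered by inclusion; $\sigma(m)=Mm^\omega M$; $\sigma(m)\ge X$ means $X\subseteq MmM$. For $X\in\Lambda(M)$, $\nabla X=\{m\in M: X\not\subseteq MmM\}$ and $\nabla Y\nabla X=\{ab: a\in\nabla Y, b\in\nabla X\}$. The vertex $X$ is the one-dimensional $kM$-module where $m$ acts by $1$ if $\sigma(m)\ge X$ and by $0$ otherwise. The quiver has $\dim\mathrm{Ext}^1(S,T)$ arrows from $S$ to $T$. *)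

(* Defs.v *)
From HB Require Import structures.
From mathcomp Require Import all_boot all_order all_algebra.
Set Implicit Arguments. Unset Strict Implicit. Unset Printing Implicit Defensive.
Import GRing.Theory.

HB.structure Definition FinMonoid := {M of Monoid M & Finite M}.

Section MonoidDefs.
Variable M : FinMonoid.type.
Local Open Scope group_scope.

Definition rideal (m : M) : {set M} := [set m * x | x : M].
Definition Rtrivial : Prop := forall m n : M, rideal m = rideal n -> m = n.
Definition idem (e : M) : bool := e * e == e.
Definition jideal (m : M) : {set M} := [set x * m * y | x : M, y : M].
Definition Lambda : {set {set M}} := [set jideal e | e in [pred e | idem e]].
(* sigma(m) >= X  means  X subset MmM *)
Definition sigma_ge (X : {set M}) (m : M) : bool := X \subset jideal m.
Definition nabla (X : {set M}) : {set M} := [set m | ~~ sigma_ge X m].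
Definition nabla2 (Y X : {set M}) : {set M} :=
  [set a * b | a in nabla Y, b in nabla X].
Definition corner (eY eX : M) : {set M} := [set eY * m * eX | m : M].

Definition genrel (eY eX : M) : rel M := fun z z' =>
  let X := jideal eX in let Y := jideal eY in
  [&& z \in corner eY eX, z' \in corner eY eX &
   [exists m : M, exists n : M,
      [&& ~~ sigma_ge Y m, sigma_ge X n, z == eY * m * n * eX & z' == eY * m * eX]]
   || (z \in nabla2 Y X) && (z' \in nabla2 Y X)].

Definition equivZ (eY eX : M) : rel M :=
  connect (fun a b => genrel eY eX a b || genrel eY eX b a).

Definition classesZ (eY eX : M) : {set {set M}} :=
  [set [set z' in corner eY eX | equivZ eY eX z z'] | z in corner eY eX].

(* Z_{X,Y}: the classes other than the class of nabla Y nabla X *)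
Definition Zset (eY eX : M) : {set {set M}} :=
  [set C in classesZ eY eX | [disjoint C & nabla2 (jideal eY) (jideal eX)]].

Variable k : fieldType.
Local Open Scope ring_scope.

(* character of the one-dimensional module X *)
Definition chi (X : {set M}) (m : M) : k := if sigma_ge X m then 1 else 0.

(* Ext^1(X, Y) for the one-dimensional modules X (top) and Y (sub):
   extensions 0 -> Y -> E -> X -> 0 are representations
   m |-> [[chi Y m, d m], [0, chi X m]], i.e. d : M -> k with
   d (m n) = chi Y m * d n + d m * chi X n  (cocycles, a subspace Z1 of k^M);
   equivalent extensions differ by coboundaries c (chi Y - chi X). *)
Definition cocycle_defect (X Y : {set M}) (d : 'rV[k]_#|M|) : 'rV[k]_#|{: M * M}| :=
  \row_p (let mn := enum_val p in
          d 0 (enum_rank (mn.1 * mn.2)%g)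
          - chi Y mn.1 * d 0 (enum_rank mn.2) - d 0 (enum_rank mn.1) * chi X mn.2).

Definition cocycles (X Y : {set M}) := kermx (lin1_mx (cocycle_defect X Y)).
Definition coboundaries (X Y : {set M}) : 'rV[k]_#|M| :=
  \row_i (chi Y (enum_val i) - chi X (enum_val i)).

(* dim Ext^1(X, Y) = dim Z1 - dim B1 = number of arrows X -> Y in Q(kM) *)
Definition ext1_dim (X Y : {set M}) : nat :=
  (\rank (cocycles X Y) - \rank (cocycles X Y :&: coboundaries X Y)%MS)%N.

(* left representations of M on k^d (column vectors) *)
Definition is_rep (d : nat) (rho : M -> 'M[k]_d) : Prop :=
  rho 1%g = 1%:M /\ forall m n : M, rho (m * n)%g = rho m *m rho n.
(* irreducible: nonzero and no proper nonzero invariant subspace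
   (subspace = row space of U, invariance of column vectors u^T under rho m) *)
Definition irreducible (d : nat) (rho : M -> 'M[k]_d) : Prop :=
  (0 < d)%N /\ forall U : 'M[k]_d,
    (forall m, (U *m (rho m)^T <= U)%MS) -> U == 0 :> 'M[k]_d \/ row_full U.

(* the vertex set of Q(kM) is Lambda(M): the modules X (X in Lambda) are
   pairwise non-isomorphic one-dimensional modules and every simple module
   is isomorphic to one of them *)
Definition vertices_are_Lambda : Prop :=
  (forall X, X \in Lambda -> is_rep (fun m => (chi X m)%:M : 'M[k]_1))
  /\ (forall X Y, X \in Lambda -> Y \in Lambda -> (forall m, chi X m = chi Y m) -> X = Y)
  /\ (forall d (rho : M -> 'M[k]_d), is_rep rho -> irreducible rho ->
        d = 1%N /\ exists2 X, X \in Lambda & forall m, rho m = (chi X m)%:M).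

End MonoidDefs.

(* Main.v *)
Require Import Defs.
From HB Require Import structures.
From mathcomp Require Import all_boot all_order all_algebra.
From mathcomp Require Import ring.
Set Implicit Arguments. Unset Strict Implicit. Unset Printing Implicit Defensive.
Section Mon.
Variable M : FinMonoid.type.
Hypothesis RT : Rtrivial M.
Local Open Scope group_scope.
Implicit Types a b c e m n x y z : M.
Lemma mA a b c : a * (b * c) = a * b * c. Proof. exact: mulgA. Qed.
Lemma m1 a : a * 1 = a. Proof. exact: mulg1. Qed.
Lemma o1 a : 1 * a = a. Proof. exact: mul1g. Qed.

Lemma jidealP m z : reflect (exists x y, z = x * m * y) (z \in jideal m).
Proof.
apply: (iffP imset2P) => [[x y _ _ ->]|[x [y ->]]]; first by exists x, y.
by exists x y.
Qed.

Lemma jideal_id m : m \in jideal m.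
Proof. by apply/jidealP; exists 1, 1; rewrite o1 m1. Qed.

Lemma jideal_sub m z : z \in jideal m -> jideal z \subset jideal m.
Proof.
move=> /jidealP [x [y ->]]; apply/subsetP => w /jidealP [a [b ->]].
by apply/jidealP; exists (a * x), (y * b); rewrite !mA.
Qed.

Lemma L1 a b c : a = a * b * c -> a = a * b.
Proof.
move=> H; apply: RT; apply/setP => z; apply/imsetP/imsetP => [[x _ ->]|[x _ ->]].
  by exists (c * x) => //; rewrite {1}H !mA.
by exists (b * x) => //; rewrite mA.
Qed.

Lemma L2 e x m y : idem e -> e = x * m * y -> e = e * x * m.
Proof.
move=> /eqP He H.
have H2 : e = e * (x * m) * y by rewrite -{1}He {2}H !mA.
by rewrite -mA; apply: L1 H2.
Qed.

Lemma idem_absorb e m : idem e -> e \in jideal m -> e * m = e.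
Proof.
move=> He /jidealP [x [y H]].
have H1 := L2 He H.
have eeq : e * e = e by apply/eqP.
set q := m * e * x.
have Hq : q * q = q.
  rewrite /q; have -> : m * e * x * (m * e * x) = m * (e * x * m) * e * x by rewrite !mA.
  by rewrite -H1 -(mA m e e) eeq.
have H4 : e = e * x * q * (m * e).
  rewrite /q; have -> : e * x * (m * e * x) * (m * e) = (e * x * m) * e * (x * m) * e by rewrite !mA.
  by rewrite -H1 eeq mA -H1 eeq.
have H5 := L2 He H4.
have H6 : e = e * x * q by rewrite {1}H5 mA eeq.
have H7 : e * q = e by rewrite {1}H6 -mA Hq -H6.
have H8 : e = e * m * (e * x) by rewrite -{1}H7 /q !mA.
by rewrite -(L1 H8).
Qed.
Lemma jideal_mem x m y : x * m * y \in jideal m.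
Proof. by apply/jidealP; exists x, y. Qed.

Lemma sgeE e m : idem e -> sigma_ge (jideal e) m = (e * m == e).
Proof.
move=> He; apply/idP/eqP => [H|H].
  by apply: idem_absorb => //; apply: (subsetP H); apply: jideal_id.
apply: jideal_sub; rewrite -{1}H -(m1 (e * m)) -(o1 e); exact: jideal_mem.
Qed.

Lemma sgeM e m n : idem e ->
  sigma_ge (jideal e) (m * n) = sigma_ge (jideal e) m && sigma_ge (jideal e) n.
Proof.
move=> He; rewrite !sgeE //; apply/eqP/andP => [H|[/eqP H1 /eqP H2]].
  have Hm : e * m = e.
    apply: idem_absorb => //; apply/jidealP; exists e, n; by rewrite -mA.
  by split; apply/eqP => //; rewrite -{1}Hm -mA.
by rewrite mA H1 H2.
Qed.

Lemma sge1 e : idem e -> sigma_ge (jideal e) 1.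
Proof. by move=> He; rewrite sgeE // m1. Qed.

Lemma sge_self e : idem e -> sigma_ge (jideal e) e.
Proof. by move=> He; rewrite sgeE. Qed.

Lemma aperiodic z : exists N, z ^+ N = z ^+ N.+1.
Proof.
pose f (i : 'I_#|M|.+1) := z ^+ i.
have [/existsP [i /existsP [j /andP [nij /eqP fij]]]|H] :=
  boolP [exists i, exists j, (i != j) && (f i == f j)].
  wlog lij : i j nij fij / i < j.
    move=> W; have := nij; rewrite neq_ltn => /orP [l|l].
      exact: (W i j).
    by apply: (W j i) => //; rewrite eq_sym.
  have [d Hj] : exists d, (j : nat) = i + d.+1.
    by exists (j - i).-1; rewrite prednK ?subn_gt0 // subnKC // ltnW.
  exists i; move: fij; rewrite /f Hj expgnDr expgS mA => /L1 H.
  by rewrite expgSr -H.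
exfalso.
have inj : injective f.
  move=> i j fij; apply/eqP; apply: contraNT H => nij.
  by apply/existsP; exists i; apply/existsP; exists j; rewrite nij fij eqxx.
by have := @leq_card _ M f inj; rewrite card_ord ltnn.
Qed.

Lemma pow_stable (z : M) N : z ^+ N = z ^+ N.+1 -> forall k, z ^+ (N + k) = z ^+ N.
Proof.
move=> H; elim=> [|k IH]; first by rewrite addn0.
by rewrite addnS expgSr IH -expgSr -H.
Qed.

Lemma right_pow (s t : M) : s = s * t -> forall k, s = s * t ^+ k.
Proof.
move=> H; elim=> [|k IH]; first by rewrite m1.
by rewrite expgSr mA -IH.
Qed.

Lemma stable (s t x y : M) : s = x * (s * t) * y -> s = s * t.
Proof.
move=> H; set w := t * y.
have Hw : s = x * s * w by rewrite {1}H /w !mA.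
have Hk : forall k, s = x ^+ k * s * w ^+ k.
  elim=> [|k IH]; first by rewrite expg0 m1 o1.
  rewrite expgSr expgS.
  have -> : x ^+ k * x * s * (w * w ^+ k) = x ^+ k * (x * s * w) * w ^+ k by rewrite !mA.
  by rewrite -Hw -IH.
have [N HN] := aperiodic w.
have Hsw : s = s * w.
  by rewrite {2}(Hk N) -mA -expgSr -HN -(Hk N).
have : s = s * t * y by rewrite {1}Hsw /w mA.
by move/L1.
Qed.
End Mon.

Section Irr.
Variable M : FinMonoid.type.
Hypothesis RT : Rtrivial M.
Variable k : fieldType.
Variable d : nat.
Variable rho : M -> 'M[k]_d.
Hypothesis Hrep : is_rep rho.
Hypothesis Hirr : irreducible rho.
Local Open Scope ring_scope.

Lemma rhoM (m n : M) : rho (m * n)%g = rho m *m rho n.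
Proof. by case: Hrep. Qed.

Definition Usp (s : M) : 'M[k]_d := (\sum_(t in jideal s) (rho t)^T)%MS.

Lemma jideal_mulL (s m t : M) : t \in jideal s -> (m * t)%g \in jideal s.
Proof.
move=> /jidealP [x [y ->]]; apply/jidealP; exists (m * x)%g, y; by rewrite !mA.
Qed.

Lemma Usp_inv s m : (Usp s *m (rho m)^T <= Usp s)%MS.
Proof.
rewrite /Usp sumsmxMr; apply/sumsmx_subP => t Ht.
rewrite -trmx_mul -rhoM; apply: (sumsmx_sup (m * t)%g) => //.
exact: jideal_mulL.
Qed.

Lemma Usp_full s : rho s != 0 -> row_full (Usp s).
Proof.
move=> Hs; have [/eqP H0|//] := Hirr.2 (Usp s) (Usp_inv s).
have : ((rho s)^T <= Usp s)%MS by apply: (sumsmx_sup s) => //; exact: jideal_id.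
rewrite H0 submx0 => /eqP H1; move: Hs; by rewrite -(trmxK (rho s)) H1 trmx0 eqxx.
Qed.

Lemma kill s (B : 'M[k]_d) : row_full (Usp s) ->
  (forall t, t \in jideal s -> (rho t)^T *m B = 0) -> B = 0.
Proof.
move=> Hf Hk.
have : (1%:M *m B <= Usp s *m B)%MS by apply: submxMr; rewrite sub1mx.
rewrite /Usp sumsmxMr mul1mx => H; apply/eqP; rewrite -submx0.
apply: (submx_trans H); apply/sumsmx_subP => t Ht; by rewrite Hk.
Qed.

Lemma scal0 : (0%:M : 'M[k]_d) = 0.
Proof. by apply/matrixP => i j; rewrite !mxE GRing.mul0rn. Qed.

Lemma irr_scalar : exists2 e, idem e & forall m, rho m = (chi k (jideal e) m)%:M.
Proof.
have P1 : rho 1%g != 0.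
  rewrite (proj1 Hrep); apply/eqP => H; have := mxrank1 k d.
  by rewrite H mxrank0 => Hd; move: (proj1 Hirr); rewrite -Hd.
case: (@arg_minnP _ 1%g (fun s => rho s != 0) (fun s => #|jideal s|) P1) => s0 Ps0 mins0.
have min_eq : forall u, rho u != 0 -> jideal u \subset jideal s0 -> jideal u = jideal s0.
  by move=> u Pu Hsub; apply/eqP; rewrite eqEcard Hsub mins0.
have [/existsP [t /andP [Ht Pt]]|Hno] := boolP [exists t in jideal s0, rho (s0 * t)%g != 0].
  have Hsub : jideal (s0 * t)%g \subset jideal s0.
    apply: jideal_sub; apply/jidealP; exists 1%g, t; by rewrite o1.
  have := jideal_id s0; rewrite -(min_eq _ Pt Hsub) => /jidealP [x [y Hxy]].
  have Hs0t := stable RT Hxy.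
  have [N HN] := aperiodic RT t.
  set g := (t ^+ N.+1)%g.
  have Hg : idem g.
    have HS := pow_stable HN.
    by apply/eqP; rewrite /g -expgnDr addSn -addnS HS HN.
  have gin : g \in jideal s0.
    apply: (subsetP (jideal_sub Ht)); apply/jidealP; exists (t ^+ N)%g, 1%g; by rewrite /g expgSr m1.
  have Hs0g : s0 = (s0 * g)%g by apply: right_pow.
  have Jg : jideal g = jideal s0.
    apply/eqP; rewrite eqEsubset jideal_sub //=; apply: jideal_sub.
    apply/jidealP; exists s0, 1%g; by rewrite m1 -Hs0g.
  have Pg : rho g != 0.
    apply: contra Ps0 => /eqP H0; by rewrite Hs0g rhoM H0 mulmx0.
  exists g => //.
  have ming : forall u, rho u != 0 -> jideal u \subset jideal g -> jideal u = jideal g.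
    by move=> u Pu; rewrite Jg; apply: min_eq.
  have zero : forall m, (g * m)%g != g -> rho m = 0.
    move=> m Hm; apply: trmx_inj; rewrite trmx0.
    apply: (kill (Usp_full Pg)) => u Hu; rewrite -trmx_mul -rhoM.
    have [->|Pmu] := eqVneq (rho (m * u)%g) 0; first by rewrite trmx0.
    have Hsub2 : jideal (m * u)%g \subset jideal g by apply: jideal_sub; exact: jideal_mulL.
    have := jideal_id g; rewrite -(ming _ Pmu Hsub2) => Hgi.
    have Hgm : g \in jideal m.
      apply: (subsetP (jideal_sub _) _ Hgi); apply/jidealP; exists 1%g, u; by rewrite o1.
    by move: Hm; rewrite (idem_absorb RT Hg Hgm) eqxx.
  set K := kermx (rho g)^T.
  have Kinv : forall m, (K *m (rho m)^T <= K)%MS.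
    move=> m; rewrite sub_kermx -mulmxA -trmx_mul -rhoM.
    have [->|ne] := eqVneq (g * m)%g g; first by rewrite mulmx_ker.
    by rewrite rhoM (zero _ ne) mulmx0 trmx0 mulmx0.
  have rg1 : rho g = 1%:M.
    have [/eqP K0|Kf] := Hirr.2 K Kinv.
      have : (rho g)^T \in unitmx by rewrite -row_free_unit -kermx_eq0 -/K K0.
      move=> U; have idm : (rho g)^T *m (rho g)^T = (rho g)^T.
        by rewrite -trmx_mul -rhoM (eqP Hg).
      have := mulmxK U ((rho g)^T); rewrite idm mulmxV // => H1.
      by apply: trmx_inj; rewrite trmx1 H1.
    exfalso; move: Kf; rewrite -sub1mx sub_kermx mul1mx trmx_eq0 => /eqP H0.
    by move: Pg; rewrite H0 eqxx.
  move=> m; rewrite /chi sgeE //.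
  have [Hm|Hm] := eqVneq (g * m)%g g.
    by rewrite -[rho m]mul1mx -{1}rg1 -rhoM Hm.
  by rewrite zero // scal0.
exfalso; move: (Ps0) => /eqP; apply.
apply: trmx_inj; rewrite trmx0; apply: (kill (Usp_full Ps0)) => t Ht.
rewrite -trmx_mul -rhoM; apply/eqP; rewrite trmx_eq0.
by move: Hno; rewrite negb_exists => /forallP /(_ t); rewrite Ht negbK.
Qed.
End Irr.

Section Vert.
Local Open Scope ring_scope.
Lemma chiM (M : FinMonoid.type) (RT : Rtrivial M) (k : fieldType) (e m n : M) :
  idem e -> chi k (jideal e) (m * n)%g = (chi k (jideal e) m * chi k (jideal e) n)%R.
Proof.
move=> He; rewrite /chi sgeM //.
by case: (sigma_ge _ m); case: (sigma_ge _ n); rewrite ?GRing.mulr1 ?GRing.mulr0.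
Qed.

Lemma vertices (M : FinMonoid.type) (k : fieldType) : Rtrivial M -> vertices_are_Lambda M k.
Proof.
move=> RT; split; [|split].
- move=> X /imsetP [e He ->]; split.
    by rewrite /chi sge1.
  by move=> m n; rewrite chiM // scalar_mxM.
- move=> X Y /imsetP [e He ->] /imsetP [f Hf ->] Hchi.
  have c1 : forall (X : {set M}) m, chi k X m = 1%R -> sigma_ge X m.
    move=> Z m; rewrite /chi; case: (sigma_ge Z m) => // /esym /eqP.
    by rewrite GRing.oner_eq0.
  apply/eqP; rewrite eqEsubset; apply/andP; split.
    apply: c1; rewrite Hchi /chi sge_self //.
  apply: c1; rewrite -Hchi /chi sge_self //.
- move=> d rho Hrep Hirr.
  have [e He Hrho] := irr_scalar RT Hrep Hirr.
  split; last by exists (jideal e) => //; apply: imset_f.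
  pose U : 'M[k]_d := pid_mx 1.
  have Uinv : forall m, (U *m (rho m)^T <= U)%MS.
    by move=> m; rewrite Hrho tr_scalar_mx mul_mx_scalar scalemx_sub.
  have Hd := proj1 Hirr.
  have rU : \rank U = 1%N by rewrite rank_pid_mx.
  have [/eqP U0|Uf] := (proj2 Hirr) U Uinv.
    by move: rU; rewrite U0 mxrank0.
  by move: Uf; rewrite /row_full rU => /eqP.
Qed.
End Vert.

Import GRing.Theory.

Section RankEval.
Variable F : fieldType.
Local Open Scope ring_scope.

Lemma sum_delta n (b : 'rV[F]_n) (y : 'I_n) :
  \sum_x b 0 x * (x == y)%:R = b 0 y.
Proof.
rewrite (bigD1 y) //= eqxx mulr1 big1 ?addr0 // => x /negbTE ->; by rewrite mulr0.
Qed.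

Lemma rank_eval n (Z : 'M[F]_n) (I : finType) (P : {set I}) (p : I -> 'I_n)
   (b : I -> 'rV[F]_n) :
  (forall i, i \in P -> (b i <= Z)%MS) ->
  (forall i j, i \in P -> j \in P -> b i 0 (p j) = (i == j)%:R) ->
  (forall v : 'rV_n, (v <= Z)%MS -> (forall j, j \in P -> v 0 (p j) = 0) -> v = 0) ->
  \rank Z = #|P|.
Proof.
move=> Hb Hd Hinj.
pose B : 'M[F]_(#|P|, n) := \matrix_(i < #|P|) b (enum_val i).
pose S : 'M[F]_(n, #|P|) := \matrix_(x, j) ((x == p (enum_val j))%:R).
have rowS : forall (w : 'rV_n) j, (w *m S) 0 j = w 0 (p (enum_val j)).
  move=> w j; rewrite !mxE; rewrite -(sum_delta w); apply: eq_bigr => x _.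
  by rewrite !mxE.
have BS : B *m S = 1%:M.
  apply/matrixP => i j.
  have := rowS (row i B) j; rewrite -row_mul rowK !mxE => ->.
  rewrite Hd ?enum_valP // (inj_eq enum_val_inj).
  by case: (i == j).
have rB : \rank B = #|P|.
  apply/eqP; rewrite eqn_leq rank_leq_row /=.
  by rewrite -{1}(mxrank1 F #|P|) -BS mxrankM_maxl.
have BZ : (B <= Z)%MS.
  by apply/row_subP => i; rewrite rowK; apply: Hb; apply: enum_valP.
have ZB : (Z <= B)%MS.
  apply/row_subP => i.
  set z := row i Z.
  have zZ : (z <= Z)%MS by apply: row_sub.
  have w0 : z - (z *m S) *m B = 0.
    apply: Hinj.
      rewrite addmx_sub // -scaleN1r scalemx_sub //.
      exact: submx_trans (submxMl _ _) BZ.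
    move=> j Hj.
    have := rowS (z - (z *m S) *m B) (enum_rank_in Hj j).
    rewrite (enum_rankK_in Hj Hj) => <-.
    by rewrite mulmxBl -(mulmxA (z *m S) B S) BS mulmx1 subrr mxE.
  have -> : z = (z *m S) *m B by apply/eqP; rewrite -subr_eq0 w0.
  exact: submxMl.
rewrite -rB; apply: eqmx_rank; by apply/andP.
Qed.
End RankEval.

Section Ext.
Variable M : FinMonoid.type.
Hypothesis RT : Rtrivial M.
Variable k : fieldType.
Local Open Scope ring_scope.

Definition val (v : 'rV[k]_#|M|) (m : M) := v 0 (enum_rank m).
Definition vec (F : M -> k) : 'rV[k]_#|M| := \row_i F (enum_val i).
Lemma valK F m : val (vec F) m = F m.
Proof. by rewrite /val /vec mxE enum_rankK. Qed.

Definition cocyc (X Y : {set M}) (v : 'rV[k]_#|M|) :=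
  forall m n, val v (m * n)%g = chi k Y m * val v n + val v m * chi k X n.

Lemma cd_linear (X Y : {set M}) : linear (@cocycle_defect M k X Y).
Proof.
move=> a u v; apply/rowP => p; rewrite /cocycle_defect !mxE; ring.
Qed.

HB.instance Definition _ (X Y : {set M}) :=
  GRing.isLinear.Build k _ _ _ (@cocycle_defect M k X Y) (cd_linear X Y).

Lemma cocycP (X Y : {set M}) v : (v <= cocycles k X Y)%MS <-> cocyc X Y v.
Proof.
have E : v *m lin1_mx (@cocycle_defect M k X Y) = @cocycle_defect M k X Y v.
  exact: mul_rV_lin1.
rewrite sub_kermx; split.
  move=> /eqP/matrixP H m n; move: (H 0 (enum_rank (m, n))).
  rewrite E /cocycle_defect !mxE enum_rankK /= /val => H1.
  apply/eqP; rewrite -subr_eq0; apply/eqP; rewrite -H1; ring.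
move=> H; apply/eqP/matrixP => i p; rewrite ord1 E /cocycle_defect !mxE.
have := H (enum_val p).1 (enum_val p).2; rewrite /val => ->; ring.
Qed.

Variables eX eY : M.
Hypothesis HeX : idem eX.
Hypothesis HeY : idem eY.
Local Notation X := (jideal eX).
Local Notation Y := (jideal eY).
Local Notation cX := (chi k X).
Local Notation cY := (chi k Y).
Local Notation bX := (sigma_ge X).
Local Notation bY := (sigma_ge Y).

Lemma cXM m n : cX (m * n)%g = cX m * cX n. Proof. exact: chiM. Qed.
Lemma cYM m n : cY (m * n)%g = cY m * cY n. Proof. exact: chiM. Qed.
Lemma bXM m n : bX (m * n)%g = bX m && bX n. Proof. exact: sgeM. Qed.
Lemma bYM m n : bY (m * n)%g = bY m && bY n. Proof. exact: sgeM. Qed.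
Lemma cXE m : cX m = if bX m then 1 else 0. Proof. by []. Qed.
Lemma cYE m : cY m = if bY m then 1 else 0. Proof. by []. Qed.
Lemma bXe : bX eX. Proof. exact: sge_self. Qed.
Lemma bYf : bY eY. Proof. exact: sge_self. Qed.

Definition Xf := bX eY.
Definition Ye := bY eX.

Definition pi m := (eY * m * eX)%g.
Definition fe := (eY * eX)%g.
Local Notation C := (corner eY eX).

Lemma cornerP z : reflect (exists m, z = pi m) (z \in C).
Proof.
apply: (iffP imsetP) => [[m _ ->]|[m ->]]; by exists m.
Qed.
Lemma pi_in m : pi m \in C. Proof. by apply/cornerP; exists m. Qed.
Lemma fe_in : fe \in C. Proof. by apply/cornerP; exists 1%g; rewrite /pi m1. Qed.
Lemma piC z : z \in C -> pi z = z.
Proof.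
move=> /cornerP [m ->]; rewrite /pi.
by rewrite -!mA (eqP HeX) !mA (eqP HeY).
Qed.
Lemma pi_eX : pi eX = fe. Proof. by rewrite /pi -mA (eqP HeX). Qed.

Lemma bX_C z : z \in C -> bX z = Xf && bX z.
Proof. by move=> /cornerP [m ->]; rewrite /pi !bXM /Xf; case: (bX eY). Qed.
Lemma bY_C z : z \in C -> bY z = Ye && bY z.
Proof. by move=> /cornerP [m ->]; rewrite /pi !bYM /Ye; case: (bX eY); case: (bY eX); rewrite ?andbF ?andbT. Qed.

Local Notation eqv := (equivZ eY eX).
Local Notation N2 := (nabla2 Y X).

Lemma eqv_refl a : eqv a a. Proof. exact: connect0. Qed.
Lemma eqv_sym a b : eqv a b = eqv b a.
Proof. apply: sym_connect_sym => x y; exact: orbC. Qed.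
Lemma eqv_trans a b c : eqv a b -> eqv b c -> eqv a c.
Proof. exact: connect_trans. Qed.

Lemma eqv_inv (F : M -> k) : (forall a b, genrel eY eX a b -> F a = F b) ->
  forall a b, eqv a b -> F a = F b.
Proof.
move=> HF a b /connectP [p]; elim: p a => [|c p IH] a /=; first by move=> _ ->.
move=> /andP [/orP [H|H] Hp] Hb; rewrite -(IH c Hp Hb); [exact: HF| symmetry; exact: HF].
Qed.

Lemma nabla2P z : reflect (exists a b, [/\ ~~ bY a, ~~ bX b & z = (a * b)%g]) (z \in N2).
Proof.
apply: (iffP imset2P) => [[a b Ha Hb ->]|[a [b [Ha Hb ->]]]].
  by exists a, b; move: Ha Hb; rewrite !inE.
by exists a b; rewrite ?inE.
Qed.

Lemma genrelP z z' : genrel eY eX z z' ->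
  [/\ z \in C, z' \in C & (exists m n, [/\ ~~ bY m, bX n, z = (eY * m * n * eX)%g & z' = (eY * m * eX)%g])
     \/ (z \in N2 /\ z' \in N2)].
Proof.
rewrite /genrel /= => /and3P [H1 H2 /orP [/existsP [m /existsP [n /and4P [a b /eqP c /eqP d]]]|/andP [a b]]].
  by split => //; left; exists m, n.
by split => //; right.
Qed.

Lemma genrel_a m n : ~~ bY m -> bX n -> genrel eY eX (pi (m * n)%g) (pi m).
Proof.
move=> Hm Hn; rewrite /genrel /= !pi_in /=; apply/orP; left.
apply/existsP; exists m; apply/existsP; exists n.
by rewrite Hm Hn /pi !mA !eqxx.
Qed.

Lemma pi_nabla m n : ~~ bY m -> ~~ bX n -> pi (m * n)%g \in N2.
Proof.
move=> Hm Hn; apply/nabla2P; exists (eY * m)%g, (n * eX)%g.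
by rewrite bYM bXM bXe bYf andbT /= Hm Hn; split => //; rewrite /pi !mA.
Qed.

Definition cls z := [set z' in C | eqv z z'].
Lemma cls_self a : a \in C -> a \in cls a.
Proof. by move=> Ha; rewrite inE Ha eqv_refl. Qed.
Lemma cls_sub a : cls a \subset C.
Proof. by apply/subsetP => z; rewrite inE => /andP []. Qed.
Lemma cls_eq a b : b \in cls a -> cls b = cls a.
Proof.
rewrite inE => /andP [Hb Hab]; apply/setP => z; rewrite !inE.
case: (z \in C) => //=; apply/idP/idP => H.
  exact: eqv_trans Hab H.
by apply: eqv_trans H; rewrite eqv_sym.
Qed.
Lemma classes_mem K a : K \in classesZ eY eX -> a \in K -> K = cls a.
Proof.
move=> /imsetP [z Hz ->] Ha; by rewrite (cls_eq Ha).
Qed.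
Lemma classes_cls a : a \in C -> cls a \in classesZ eY eX.
Proof. by move=> Ha; apply: imset_f. Qed.

Lemma cls_memE K a b : K \in classesZ eY eX -> eqv a b -> a \in C -> b \in C ->
  (a \in K) = (b \in K).
Proof.
move=> /imsetP [z0 _ ->] Hab Ha Hb; rewrite !inE Ha Hb /=.
apply/idP/idP => H; first exact: eqv_trans H Hab.
by apply: eqv_trans H _; rewrite eqv_sym.
Qed.

Definition dK (K : {set M}) := vec (fun m => (pi m \in K)%:R - (fe \in K)%:R * cX m).
Definition uu := coboundaries k X Y.
Lemma uuE m : val uu m = cY m - cX m.
Proof. by rewrite /val /uu /coboundaries mxE enum_rankK. Qed.

Lemma uu_cocyc : cocyc X Y uu.
Proof. move=> m n; rewrite !uuE cXM cYM; ring. Qed.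

Lemma eYm m : bY m -> (eY * m = eY)%g.
Proof. by rewrite sgeE // => /eqP. Qed.

Lemma dK_cocyc K : K \in Zset eY eX -> cocyc X Y (dK K).
Proof.
rewrite inE => /andP [HK Hdis] m n; rewrite !valK cXM !cYE !cXE.
case HbY: (bY m).
  have E1 : pi (m * n)%g = pi n by rewrite /pi mA (eYm HbY).
  have E2 : pi m = fe by rewrite /pi (eYm HbY).
  rewrite E1 E2; case: (bX m); case: (bX n) => /=; ring.
case HbX: (bX n).
  rewrite (@cls_memE K (pi (m * n)%g) (pi m) HK) ?pi_in //.
    case: (bX m) => /=; ring.
  by apply: connect1; rewrite genrel_a ?HbY ?HbX.
have HN : pi (m * n)%g \in N2 by apply: pi_nabla; rewrite ?HbY ?HbX.
rewrite (disjointFl Hdis HN); case: (bX m) => /=; ring.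
Qed.

Lemma dbl0 (x : k) : x = x + x -> x = 0.
Proof. by move=> H; apply: (@addrI _ x); rewrite addr0 -H. Qed.

Lemma N2_zero d : cocyc X Y d -> forall z, z \in N2 -> val d z = 0.
Proof.
move=> Hd z /nabla2P [a [b [Ha Hb ->]]].
by rewrite Hd !cYE !cXE (negbTE Ha) (negbTE Hb) mul0r mulr0 addr0.
Qed.

Lemma cocyc_gen d : cocyc X Y d -> forall a b, genrel eY eX a b -> val d a = val d b.
Proof.
move=> Hd a b /genrelP [_ _ [[m [n [Hm Hn -> ->]]]|[Ha Hb]]].
  rewrite -mA Hd [in RHS]Hd !cYM !cXM !cYE !cXE bYf bXe Hn (negbTE Hm) /=.
  by rewrite mulr0 !mul0r !mulr1 !add0r.
by rewrite !N2_zero.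
Qed.

Lemma recon d : cocyc X Y d -> forall m,
  val d m = val d (pi m) - cY m * val d eX - val d eY * cX m.
Proof.
move=> Hd m; rewrite /pi -mA Hd Hd cXM !cYE !cXE bYf bXe; ring.
Qed.

Definition rep (K : {set M}) := odflt eX [pick z in K].
Lemma rep_in K : K \in classesZ eY eX -> rep K \in K.
Proof.
move=> /imsetP [z0 Hz0 ->]; rewrite /rep; case: pickP => [x //|/(_ z0)].
by rewrite cls_self.
Qed.
Lemma rep_C K : K \in classesZ eY eX -> rep K \in C.
Proof.
move=> HK; have := rep_in HK; move: HK => /imsetP [z0 _ ->].
by apply/subsetP; apply: cls_sub.
Qed.

Definition Zp := [set K in Zset eY eX | ~~ (Xf && (fe \in K))].
Definition PP : {set option {set M}} :=
  (Some @: Zp) :|: (if Ye then set0 else [set None]).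
Definition pt (o : option {set M}) :=
  enum_rank (match o with Some K => rep K | None => eX end).
Definition bb (o : option {set M}) :=
  match o with Some K => dK K | None => (if Xf then dK (cls fe) else (0 : 'rV[k]_#|M|)) - uu end.

Lemma eqv_cls z w : w \in cls z -> eqv z w.
Proof. by rewrite inE => /andP []. Qed.

Lemma inj_PP (v : 'rV[k]_#|M|) : (v <= cocycles k X Y)%MS -> (forall j, j \in PP -> v 0 (pt j) = 0) -> v = 0.
Proof.
move=> /cocycP Hd Hz; set d := val v.
have deX : d eX = 0.
  case HYe: Ye.
    apply: dbl0; move: (Hd eX eX); rewrite (eqP HeX) !cYE !cXE bXe.
    by move: HYe; rewrite /Ye => ->; rewrite mul1r mulr1.
  have H0 : None \in PP by rewrite /PP HYe !inE eqxx orbT.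
  exact: (Hz None H0).
have dfe : d fe = d eX + d eY.
  by rewrite /d /fe Hd !cYE !cXE bYf bXe mul1r mulr1.
have deY_Xf : Xf -> d eY = 0.
  move=> HXf; apply: dbl0; move: (Hd eY eY); rewrite (eqP HeY) !cYE !cXE bYf.
  by move: HXf; rewrite /Xf => ->; rewrite mul1r mulr1.
have HC : forall z, z \in C -> d z = 0.
  move=> z Hzc; have HK := classes_cls Hzc.
  have [Hdis|Hndis] := boolP [disjoint cls z & N2].
    have KZ : cls z \in Zset eY eX by rewrite inE HK.
    have [/andP [HXf Hfe]|Hn] := boolP (Xf && (fe \in cls z)).
      rewrite /d (@eqv_inv (val v) (cocyc_gen Hd) z fe (eqv_cls Hfe)) -/d.
      by rewrite dfe deX deY_Xf // addr0.
    have KP : Some (cls z) \in PP by rewrite /PP inE; apply/orP; left; apply: imset_f; rewrite inE KZ.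
    have := Hz _ KP; rewrite /pt => H0.
    rewrite /d (@eqv_inv (val v) (cocyc_gen Hd) z (rep (cls z))) //.
    exact: eqv_cls (rep_in HK).
  move: Hndis; rewrite -setI_eq0 => /set0Pn [w]; rewrite inE => /andP [Hw HwN].
  rewrite /d (@eqv_inv (val v) (cocyc_gen Hd) z w (eqv_cls Hw)).
  exact: N2_zero.
have deY : d eY = 0.
  by move: (HC _ fe_in); rewrite dfe deX add0r.
apply/rowP => i; rewrite mxE.
have := recon Hd (enum_val i); rewrite /val enum_valK => ->.
by rewrite -/(val v _) -/(val v eX) -/(val v eY) -/d HC ?pi_in // deX deY; ring.
Qed.

Lemma cX_gen a b : genrel eY eX a b -> cX a = cX b.
Proof.
move=> /genrelP [_ _ [[m [n [Hm Hn -> ->]]]|[Ha Hb]]].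
  by rewrite !cXM [cX n]cXE Hn mulr1.
move: Ha Hb => /nabla2P [a1 [b1 [_ Hb1 ->]]] /nabla2P [a2 [b2 [_ Hb2 ->]]].
by rewrite !cXM ![cX b1]cXE ![cX b2]cXE (negbTE Hb1) (negbTE Hb2) !mulr0.
Qed.

Lemma clsfe_Z : Xf -> cls fe \in Zset eY eX.
Proof.
move=> HXf; rewrite inE classes_cls ?fe_in //=.
rewrite -setI_eq0; apply/eqP/setP => w; rewrite !inE.
apply/negbTE/negP => /andP [/andP [HwC Hfw] HwN].
have E := @eqv_inv cX cX_gen fe w Hfw.
have HXf2 : bX eY := HXf.
move: E; rewrite /fe cXM !cXE HXf2 bXe.
move: HwN => /nabla2P [a [b [_ Hb ->]]]; rewrite bXM (negbTE Hb) andbF mulr1.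
by move/eqP; rewrite oner_eq0.
Qed.

Lemma valB (v w : 'rV[k]_#|M|) m : val (v - w) m = val v m - val w m.
Proof. by rewrite /val !mxE. Qed.
Lemma val0 m : val (0 : 'rV[k]_#|M|) m = 0.
Proof. by rewrite /val mxE. Qed.

Lemma bb_sub o : o \in PP -> (bb o <= cocycles k X Y)%MS.
Proof.
have Hu : (uu <= cocycles k X Y)%MS by apply/cocycP; exact: uu_cocyc.
have HmU : (- uu <= cocycles k X Y)%MS by rewrite -scaleN1r scalemx_sub.
rewrite /PP inE => /orP [/imsetP [K HK ->]|].
  by apply/cocycP; apply: dK_cocyc; move: HK; rewrite inE => /andP [].
case: Ye; rewrite ?inE // => /eqP ->; rewrite /bb.
case HXf: Xf; rewrite addmx_sub //; first by apply/cocycP; apply: dK_cocyc; apply: clsfe_Z.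
exact: sub0mx.
Qed.

Definition pnt (o : option {set M}) := match o with Some K => rep K | None => eX end.

Lemma bXz z : z \in C -> ~~ Xf -> cX z = 0.
Proof. by move=> Hz HXf; rewrite cXE bX_C // (negbTE HXf). Qed.
Lemma bYz z : z \in C -> ~~ Ye -> cY z = 0.
Proof. by move=> Hz HYe; rewrite cYE bY_C // (negbTE HYe). Qed.

Lemma classes_Zp K : K \in Zp -> K \in classesZ eY eX.
Proof. by rewrite !inE => /andP [/andP []]. Qed.

Lemma delta_PP i j : i \in PP -> j \in PP -> bb i 0 (pt j) = (i == j)%:R.
Proof.
have valdK_eX : forall K, val (dK K) eX = 0.
  by move=> K; rewrite valK pi_eX cXE bXe mulr1 subrr.
have rep_cls : forall K K', K \in classesZ eY eX -> K' \in classesZ eY eX ->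
    (rep K' \in K) = (K == K').
  move=> K K' HK HK'; apply/idP/eqP => [H|->]; last exact: rep_in.
  by rewrite (classes_mem HK H) -(classes_mem HK' (rep_in HK')).
rewrite /PP !inE => Hi Hj.
have HYe : None \in PP -> ~~ Ye.
  by rewrite /PP !inE; case: Ye; rewrite ?inE ?orbF //= => /imsetP [].
case: i Hi => [K|] Hi; case: j Hj => [K'|] Hj.
- move: Hi Hj => /orP [/imsetP [K1 HK1 [->]]|]; last by case: Ye; rewrite ?inE.
  move=> /orP [/imsetP [K2 HK2 [->]]|]; last by case: Ye; rewrite ?inE.
  rewrite -[bb _ 0 _]/(val (dK K1) (rep K2)) valK.
  have HC2 := classes_Zp HK2; have HC1 := classes_Zp HK1.
  rewrite piC ?rep_C // rep_cls //.
  have -> : ((fe \in K1)%:R * cX (rep K2) = 0 :> k).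
    case HXf: Xf; last by rewrite bXz ?rep_C ?HXf // mulr0.
    by move: HK1; rewrite !inE HXf /= => /andP [_ /negbTE ->]; rewrite mul0r.
  by rewrite subr0 (inj_eq (@Some_inj _)).
- by rewrite -[bb _ 0 _]/(val (dK K) eX) valdK_eX.
- have HnY : ~~ Ye by apply: HYe; rewrite /PP !inE.
  move: Hj => /orP [/imsetP [K2 HK2 [->]]|]; last by case: Ye; rewrite ?inE.
  have HC2 := classes_Zp HK2; have Hz := rep_C HC2.
  rewrite -[bb _ 0 _]/(val (bb None) (rep K2)) /bb valB uuE bYz // sub0r opprK.
  case HXf: Xf; last by rewrite val0 bXz ?HXf // addr0.
  rewrite valK piC // rep_cls ?classes_cls ?fe_in //.
  have -> : (cls fe == K2) = false.
    apply/negbTE/eqP => E; move: HK2; rewrite !inE HXf -E cls_self ?fe_in //.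
    by rewrite andbF.
  by rewrite cls_self ?fe_in // mul1r sub0r addrC subrr.
- have HnY : ~~ Ye by apply: HYe; rewrite /PP !inE.
  rewrite -[bb _ 0 _]/(val (bb None) eX) /bb valB uuE cXE bXe.
  have HnY2 : ~~ bY eX := HnY.
  rewrite cYE (negbTE HnY2) eqxx.
  by case: Xf; rewrite ?valdK_eX ?val0 !sub0r opprK.
Qed.

Lemma card_Zp : #|Zset eY eX| = (#|Zp| + Xf)%N.
Proof.
case HXf: Xf.
  rewrite (cardsD1 (cls fe)) clsfe_Z // addnC; congr (_ + _)%N.
  apply: eq_card => K; rewrite !inE HXf /=.
  case HKc: (K \in classesZ eY eX); rewrite /= ?andbF //.
  case: [disjoint K & N2]; rewrite ?andbF ?andbT //=.
  congr (~~ _); apply/eqP/idP => [->|Hf]; first exact: cls_self fe_in.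
  exact: (classes_mem HKc Hf).
rewrite addn0; apply: eq_card => K; by rewrite !inE HXf andbT.
Qed.

Lemma card_PP : #|PP| = (#|Zp| + ~~ Ye)%N.
Proof.
rewrite /PP.
case: Ye; first by rewrite setU0 (card_imset _ (@Some_inj _)) addn0.
rewrite setUC cardsU1 (card_imset _ (@Some_inj _)) addnC; congr (_ + _)%N.
suff -> : (None \in [set Some x | x in Zp]) = false by [].
by apply/negbTE/negP => /imsetP [x _].
Qed.

Lemma rank_cocyc : \rank (cocycles k X Y) = #|PP|.
Proof.
apply: (@rank_eval _ _ _ _ PP pt bb).
- exact: bb_sub.
- exact: delta_PP.
- exact: inj_PP.
Qed.

Lemma rank_cap : \rank (cocycles k X Y :&: coboundaries k X Y)%MS = ~~ (Xf && Ye).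
Proof.
have Hu : (coboundaries k X Y <= cocycles k X Y)%MS by apply/cocycP; exact: uu_cocyc.
rewrite (eqmx_rank (introT eqmxP (capmx_idPr Hu))) rank_rV.
congr nat_of_bool.
case HXf: Xf; case HYe: Ye => /=.
- apply/negbTE/negPn/eqP/rowP => i; rewrite mxE.
  have E : X = Y.
    by apply/eqP; rewrite eqEsubset; apply/andP; split; [exact: HXf|exact: HYe].
  by rewrite E subrr mxE.
- apply/eqP => E; move: (f_equal (fun w => val w eX) E).
  rewrite -/uu uuE val0 cYE cXE bXe.
  have HnY2 : bY eX = false := HYe.
  by rewrite HnY2 sub0r => /eqP; rewrite oppr_eq0 oner_eq0.
- apply/eqP => E; move: (f_equal (fun w => val w eY) E).
  rewrite -/uu uuE val0 cYE cXE bYf.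
  have HnX2 : bX eY = false := HXf.
  by rewrite HnX2 subr0 => /eqP; rewrite oner_eq0.
- apply/eqP => E; move: (f_equal (fun w => val w eY) E).
  rewrite -/uu uuE val0 cYE cXE bYf.
  have HnX2 : bX eY = false := HXf.
  by rewrite HnX2 subr0 => /eqP; rewrite oner_eq0.
Qed.

Lemma ext_main : ext1_dim k X Y = (#|PP| - ~~ (Xf && Ye))%N.
Proof. by rewrite /ext1_dim rank_cocyc rank_cap. Qed.

Lemma ext_final :
  (~~ (X \subset Y) && ~~ (Y \subset X) -> ext1_dim k X Y = #|Zset eY eX|) /\
  (~~ (~~ (X \subset Y) && ~~ (Y \subset X)) -> ext1_dim k X Y = (#|Zset eY eX| - 1)%N).
Proof.
rewrite ext_main card_PP card_Zp.
have -> : (X \subset Y) = Xf by [].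
have -> : (Y \subset X) = Ye by [].
by case: Xf; case: Ye => /=; split => //; rewrite ?addn0 ?addn1 ?subn0 ?subn1.
Qed.
End Ext.


Theorem mainTheorem9 (M : FinMonoid.type) (k : fieldType) :
  Rtrivial M ->
  vertices_are_Lambda M k /\
  forall eX eY : M, idem eX -> idem eY ->
    let X := jideal eX in
    let Y := jideal eY in
    (~~ (X \subset Y) && ~~ (Y \subset X) ->
       ext1_dim k X Y = #|Zset eY eX|) /\
    (~~ (~~ (X \subset Y) && ~~ (Y \subset X)) ->
       ext1_dim k X Y = (#|Zset eY eX| - 1)%N).
Proof.
move=> RT; split; first exact: vertices.
move=> eX eY HeX HeY /=.
exact: (ext_final RT k HeX HeY).
Qed.
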